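(* Let $(\gamma_{n})_{n\in\mathbb{N}}$ be nonnegative integrable functions on $[0,\infty)$ with $\rho:=\sup_{n\in\mathbb{N}}\int_{0}^{\infty}\gamma_{n}(t)dt<1$, let $a(t)>0$ with $a(t)/t\to0$, and let $G_{n}(t,\theta,M)$, $C_{n}^{1}(s,M)$, $C_{n}^{2}(s,M)$ be as defined in the context. Fix $\theta\in\mathbb{R}$ and let $k_{1}\ge\frac{1}{1-\rho}$ be a constant such that for all sufficiently large $t$, $|G_{n}(s,\frac{a(t)}{t}\theta,M)|\le k_{1}\frac{a(t)}{t}|\theta|$ uniformly in $1\le n\le M$, $M\in\mathbb{N}$, $s\ge0$. Let $$k_{2}:=\frac{4\left[\frac{\rho}{2(1-\rho)^{3}}\left[k_{1}+\frac{1}{1-\rho}\right]+\rho k_{1}^{3}\right]}{(4-\rho)(1-\rho)}.$$ Then for all sufficiently large $t$ such that $k_{1}\frac{a(t)}{t}|\theta|\le\frac{1-\rho}{4}$, $$\left|G_{n}\left(s,\tfrac{a(t)}{t}\theta,M\right)-C_{n}^{1}(s,M)\tfrac{a(t)}{t}\theta-C_{n}^{2}(s,M)\left(\tfrac{a(t)}{t}\theta\right)^{2}\right|\le k_{2}\left[\tfrac{a(t)}{t}|\theta|\right]^{3},$$ uniformly in $1\le n\le M$, $M\in\mathbb{N}$, $s\ge0$.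
   Context: For $M\in\mathbb{N}$, $\theta\in\mathbb{R}$, $t\ge0$: $G_{M}(t,\theta,M)=\theta$ and for $0\le n\le M-1$, $G_{n}(t,\theta,M)=\theta+\int_{0}^{t}(e^{G_{n+1}(t-s,\theta,M)}-1)\gamma_{n}(s)ds$. Also $C_{M}^{1}(s,M)=1$, $C_{M}^{2}(s,M)=0$, and for $1\le n<M$: $C_{n}^{1}(s,M)=1+\int_{0}^{s}C_{n+1}^{1}(s-r,M)\gamma_{n}(r)dr$, $C_{n}^{2}(s,M)=\int_{0}^{s}\left(C_{n+1}^{2}(s-r,M)+\frac12[C_{n+1}^{1}(s-r,M)]^{2}\right)\gamma_{n}(r)dr$. *)

(* Defs.v *)
From HB Require Import structures.
From mathcomp Require Import all_boot all_order all_algebra.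
From mathcomp Require Import all_classical all_reals all_analysis.
Set Implicit Arguments. Unset Strict Implicit. Unset Printing Implicit Defensive.
Import Order.TTheory GRing.Theory Num.Theory.
Import numFieldNormedType.Exports.
Local Open Scope classical_set_scope.
Local Open Scope ring_scope.

Section Defs.
Variable R : realType.
Variable gamma : nat -> R -> R.

Definition int0 (t : R) (f : R -> R) : R :=
  \int[(@lebesgue_measure R)]_(r in `[0, t]) f r.

(* Grec k n t th : G_n(t, th, M) where k = M - n remaining steps *)
Fixpoint Grec (k n : nat) (t th : R) : R :=
  match k with
  | 0 => th
  | k'.+1 => th + int0 t (fun s => (expR (Grec k' n.+1 (t - s) th) - 1) * gamma n s)
  end.

(* G_n(t, th, M) (meaningful for n <= M) *)
Definition G (n : nat) (t th : R) (M : nat) : R := Grec (M - n) n t th.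

Fixpoint C1rec (k n : nat) (s : R) : R :=
  match k with
  | 0 => 1
  | k'.+1 => 1 + int0 s (fun r => C1rec k' n.+1 (s - r) * gamma n r)
  end.

Fixpoint C2rec (k n : nat) (s : R) : R :=
  match k with
  | 0 => 0
  | k'.+1 => int0 s (fun r => (C2rec k' n.+1 (s - r)
                 + 2^-1 * (C1rec k' n.+1 (s - r)) ^+ 2) * gamma n r)
  end.

(* C_n^1(s, M), C_n^2(s, M) (meaningful for 1 <= n <= M) *)
Definition C1 (n : nat) (s : R) (M : nat) : R := C1rec (M - n) n s.
Definition C2 (n : nat) (s : R) (M : nat) : R := C2rec (M - n) n s.

End Defs.

(* Main.v *)
Require Import Defs.
From HB Require Import structures.
From mathcomp Require Import all_boot all_order all_algebra.
From mathcomp Require Import all_classical all_reals all_analysis.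
Import Order.TTheory GRing.Theory Num.Theory.
From mathcomp Require Import measurable_realfun lebesgue_integral_fubini.
From mathcomp Require Import ring lra zify.
Import numFieldNormedType.Exports.
Local Open Scope classical_set_scope.
Local Open Scope ring_scope.

Section S.
Variable R : realType.
Notation mu := (@lebesgue_measure R).

Lemma meas_conv (g : R -> R) (f : R -> R) :
  measurable_fun (`[0, +oo[ : set R) g -> measurable_fun setT f ->
  measurable_fun setT (fun s => int0 s (fun r => f (s - r) * g r)).
Proof.
move=> mg mf.
pose g' := g \_ (`[0, +oo[ : set R).
have mg' : measurable_fun setT g'.
  by apply/measurable_restrict => //; rewrite setTI.
pose F := fun z : R * R => (f (z.1 - z.2) * g' z.2 * \1_(`[0, +oo[ : set R) (z.1 - z.2))%:E.
have mB : measurable_fun setT (fun z : R * R => z.1 - z.2).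
  exact: measurable_funB measurable_fst measurable_snd.
have mF : measurable_fun setT F.
  apply/measurable_EFinP; apply: measurable_funM; first apply: measurable_funM.
  - exact: measurableT_comp mf mB.
  - exact: measurableT_comp mg' measurable_snd.
  - apply: measurableT_comp mB; exact: measurable_indic.
have E s : int0 s (fun r => f (s - r) * g r) =
   fine (fubini_F mu (F^\+) s - fubini_F mu (F^\-) s)%E.
  rewrite /int0 /Rintegral integral_mkcond (_ : (_ \_ _) = (fun y => F (s, y))).
    rewrite integralE /fubini_F; congr (fine (_ - _)); apply: eq_integral => y _.
      by rewrite !funeposE.
    by rewrite !funenegE.
  apply/funext => r; rewrite /F /g' /patch /=.
  rewrite !mem_setE !in_itv /= !andbT.
  case: (boolP (0 <= r)) => r0 /=; last first.
    have -> : (point : R) = 0 by []. have -> : (point : \bar R) = 0%E by [].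
    by rewrite mulr0 mul0r.
  rewrite /indic mem_setE in_itv /= andbT subr_ge0.
  by case: (r <= s); rewrite ?mulr1 ?mulr0.
rewrite (_ : (fun s => _) = (fine \o (fun s => (fubini_F mu (F^\+) s - fubini_F mu (F^\-) s)%E))); last first.
  by apply/funext => s; rewrite E.
apply: measurableT_comp; first exact: fine_measurable.
apply: emeasurable_funB.
- apply: measurable_fun_fubini_tonelli_F => //.
  exact: measurable_funepos.
- apply: measurable_fun_fubini_tonelli_F => //.
  exact: measurable_funeneg.
Qed.
End S.
Section E3.
Variable R : realType.

Lemma fact_ge m : (2 ^ m.+1 <= (m.+3)`!)%N.
Proof.
elim: m => [//|m IH]; rewrite factS expnS; apply: leq_mul => //.
Qed.

Lemma ser3 (g : R) m : `|g| <= 1 ->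
  `|series (exp_coeff g) m.+3 - (1 + g + g ^+ 2 / 2)| <= `|g| ^+ 3 * (1 - 2^-1 ^+ m).
Proof.
move=> g1; elim: m => [|m IH].
  rewrite expr0 subrr mulr0 normr_le0 subr_eq0.
  rewrite /series /= !big_nat_recr //= big_nil /exp_coeff /= add0r.
  by rewrite !expr0 expr1 !divr1 /=.
rewrite seriesSr addrAC; apply: le_trans (ler_normD _ _) _.
apply: le_trans (lerD IH (lexx _)) _.
rewrite /exp_coeff /= normrM normrX normfV normr_nat.
have hi : ((m.+3)`!%:R : R)^-1 <= 2^-1 ^+ m.+1.
  rewrite exprVn lef_pV2 ?posrE ?exprn_gt0 ?ltr0n ?fact_gt0 //.
  by rewrite -natrX ler_nat fact_ge.
have hg : `|g| ^+ m.+3 <= `|g| ^+ 3.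
  rewrite -addn3 exprD -[leRHS]mul1r ler_wpM2r ?exprn_ge0 //.
  exact: exprn_ile1.
have i0 : 0 <= ((m.+3)`!%:R : R)^-1 by rewrite invr_ge0 ler0n.
have := ler_pM (exprn_ge0 _ (normr_ge0 g)) i0 hg hi.
set a := `|g| ^+ 3; rewrite [2^-1 ^+ m.+1]exprS; set h := 2^-1 ^+ m; lra.
Qed.

Lemma ser3' (g : R) N : `|g| <= 1 -> (3 <= N)%N ->
  `|series (exp_coeff g) N - (1 + g + g ^+ 2 / 2)| <= `|g| ^+ 3.
Proof.
move=> g1 hN; have [m ->] : exists m, N = m.+3 by exists (N - 3)%N; lia.
apply: le_trans (ser3 g m g1) _.
rewrite -[leRHS]mulr1 ler_wpM2l ?exprn_ge0 // lerBlDr lerDl exprn_ge0 //.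
Qed.

Lemma exp3b (g : R) : `|g| <= 1 -> `|expR g - 1 - g - g ^+ 2 / 2| <= `|g| ^+ 3.
Proof.
move=> g1.
have -> : expR g - 1 - g - g ^+ 2 / 2 = expR g - (1 + g + g ^+ 2 / 2) by ring.
rewrite ler_norml; apply/andP; split.
- rewrite lerBrDr; apply: limr_ge; first exact: is_cvg_series_exp_coeff.
  exists 3%N => // N /= hN.
  have := ser3' g N g1 hN; rewrite ler_norml => /andP[h _]; lra.
- rewrite lerBlDr; apply: limr_le; first exact: is_cvg_series_exp_coeff.
  exists 3%N => // N /= hN.
  have := ser3' g N g1 hN; rewrite ler_norml => /andP[_ h]; lra.
Qed.

Lemma arith (rho c1 c2 k1 u E : R) : 0 <= rho -> rho < 1 -> 0 <= c1 -> c1 <= k1 ->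
  0 <= c2 -> 0 <= u -> k1 * u <= (1 - rho) / 4 ->
  E = 4 * (c2 * (k1 + c1) + rho * k1 ^+ 3) / ((4 - rho) * (1 - rho)) * u ^+ 3 ->
  rho * (E + (k1 * u) ^+ 3 + (E + c2 * u ^+ 2) * (k1 * u + c1 * u) / 2) <= E.
Proof.
move=> r0 r1 c10 c1k c20 u0 hK hE.
have d0 : 0 < (4 - rho) * (1 - rho) by apply: mulr_gt0; lra.
have key : E * ((4 - rho) * (1 - rho)) = 4 * (c2 * (k1 + c1) + rho * k1 ^+ 3) * u ^+ 3.
  rewrite hE; field; apply/andP; split; rewrite gt_eqF //; lra.
have k10 : 0 <= k1 by lra.
have E0 : 0 <= E.
  rewrite hE; apply: mulr_ge0; last exact: exprn_ge0.
  apply: divr_ge0; last exact: ltW.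
  apply: mulr_ge0 => //; apply: addr_ge0; first by apply: mulr_ge0 => //; lra.
  by apply: mulr_ge0 => //; exact: exprn_ge0.
have cu : c1 * u <= k1 * u by rewrite ler_wpM2r.
have hw : k1 * u + c1 * u <= (1 - rho) / 2 by lra.
have f1 : rho * E * (k1 * u + c1 * u) <= rho * E * ((1 - rho) / 2).
  by rewrite ler_wpM2l // mulr_ge0.
have P0 : 0 <= c2 * (k1 + c1) * u ^+ 3.
  by rewrite mulr_ge0 ?exprn_ge0 // mulr_ge0 //; lra.
have f3 : rho * (c2 * (k1 + c1) * u ^+ 3) / 2 <= c2 * (k1 + c1) * u ^+ 3.
  move: P0; set P := c2 * (k1 + c1) * u ^+ 3 => P0.
  have : rho * P <= P by rewrite ler_piMl //; lra.
  lra.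
move: key f1 f3; rewrite !exprS !expr0; lra.
Qed.

Lemma pt (g c d x E K a1 a2 : R) : `|g - c * x - d * x ^+ 2| <= E -> `|g| <= K ->
  K <= 1 -> `|c| <= a1 -> `|d| <= a2 ->
  `|expR g - 1 - x * c - x ^+ 2 * (d + 2^-1 * c ^+ 2)| <=
     E + K ^+ 3 + (E + a2 * `|x| ^+ 2) * (K + a1 * `|x|) / 2.
Proof.
move=> hE hg K1 hc hd.
set e := g - c * x - d * x ^+ 2.
have -> : expR g - 1 - x * c - x ^+ 2 * (d + 2^-1 * c ^+ 2) =
   e + (expR g - 1 - g - g ^+ 2 / 2) + (e + d * x ^+ 2) * (g + c * x) / 2.
  by rewrite /e; field.
apply: le_trans (ler_normD _ _) _; apply: lerD.
  apply: le_trans (ler_normD _ _) _; apply: lerD => //.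
  apply: le_trans (exp3b g (le_trans hg K1)) _.
  by rewrite lerXn2r ?nnegrE ?(le_trans _ hg) //.
rewrite normrM normfV (ger0_norm (ler0n _ 2)) ler_pM2r ?invr_gt0 ?ltr0n //.
rewrite normrM; apply: ler_pM => //.
- apply: le_trans (ler_normD _ _) _; apply: lerD => //.
  by rewrite normrM normrX ler_wpM2r ?exprn_ge0.
- apply: le_trans (ler_normD _ _) _; apply: lerD => //.
  by rewrite normrM ler_wpM2r.
Qed.
End E3.
Section S2.
Variable R : realType.
Notation mu := (@lebesgue_measure R).
Variable gamma : nat -> R -> R.
Variable rho : R.
Hypothesis g0 : forall n t, 0 <= t -> 0 <= gamma n t.
Hypothesis gi : forall n, mu.-integrable `[0, +oo[ (fun t => (gamma n t)%:E).
Hypothesis grho : forall n, \int[mu]_(t in `[0, +oo[) gamma n t <= rho.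

Lemma mgam n : measurable_fun (`[0, +oo[ : set R) (gamma n).
Proof. apply/measurable_EFinP; exact: (measurable_int mu (gi n)). Qed.

Lemma sub0s (s : R) : (`[0, s] : set R) `<=` `[0, +oo[.
Proof. by move=> x; rewrite /= !in_itv /= => /andP[-> _]. Qed.

Lemma gis n (s : R) : mu.-integrable `[0, s] (EFin \o gamma n).
Proof. apply: integrableS (gi n) => //; exact: sub0s. Qed.

Lemma int_conv n (f : R -> R) (s B : R) : measurable_fun setT f ->
  (forall y, 0 <= y <= s -> `|f y| <= B) ->
  mu.-integrable `[0, s] (EFin \o (fun r => f (s - r) * gamma n r)).
Proof.
move=> mf fB.
apply: (@le_integrable _ _ _ mu _ (measurable_itv _) _ (fun r => (B * gamma n r)%:E)).
- apply/measurable_EFinP; apply: measurable_funM.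
    have ms : measurable_fun setT (fun r : R => f (s - r)).
      apply: measurableT_comp mf _.
      exact: (measurable_funB (measurable_cst s) (@measurable_id _ _ setT)).
    exact: measurable_funS ms.
  by apply: measurable_funS (mgam n) => //; exact: sub0s.
- move=> r; rewrite /= in_itv /= => /andP[r0 rs].
  rewrite lee_fin normrM (ger0_norm (g0 _ _ r0)); apply: le_trans (ler_norm _).
  by rewrite ler_wpM2r ?(g0 _ _ r0)// fB// subr_ge0 rs /= lerBlDr lerDl.
- have := @integrableZl _ _ _ mu _ (measurable_itv `[0, s]) B _ (gis n s).
  move=> h; apply: (@eq_integrable _ _ _ mu _ (measurable_itv _) _ _ _ h) => r _ /=.
  by rewrite EFinM.
Qed.

Lemma sub_int n (s : R) : \int[mu]_(t in `[0, s]) gamma n t <= rho.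
Proof.
apply: le_trans (grho n); rewrite /Rintegral; apply: fine_le.
- exact: integrable_fin_num (gis n s).
- exact: integrable_fin_num (gi n).
- apply: ge0_subset_integral => //; last exact: sub0s.
  + by case/integrableP: (gi n).
  + by move=> x /=; rewrite in_itv /= andbT lee_fin => /g0.
Qed.

Lemma bound_conv n (f : R -> R) (s B : R) : measurable_fun setT f ->
  (forall y, 0 <= y <= s -> `|f y| <= B) -> 0 <= s ->
  `|int0 s (fun r => f (s - r) * gamma n r)| <= B * rho.
Proof.
move=> mf fB s0.
have B0 : 0 <= B by apply: le_trans (fB 0 _); rewrite ?lexx.
rewrite /int0.
have mI : measurable (`[0, s] : set R) by [].
apply: le_trans (le_normr_Rintegral _ (int_conv _ _ _ _ mf fB)) _ => //.
rewrite (@eq_Rintegral _ _ _ mu _ (fun r => `|f (s - r)| * gamma n r)); last first.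
  move=> r; rewrite inE /= in_itv /= => /andP[r0 _].
  by rewrite normrM (ger0_norm (g0 _ _ r0)).
have mfa : measurable_fun setT (fun y => `|f y|) by apply: measurableT_comp mf.
have fBa : forall y, 0 <= y <= s -> `| `|f y| | <= B by move=> y /fB; rewrite normr_id.
have cB : forall y, 0 <= y <= s -> `| (fun _ : R => B) y | <= `|B| by move=> y.
apply: le_trans (_ : _ <= \int[mu]_(r in `[0, s]) ((fun _ => B) (s - r) * gamma n r)) _.
  apply: le_Rintegral => //.
  - exact: int_conv _ _ _ _ mfa fBa.
  - exact: int_conv _ _ _ _ (measurable_cst B) cB.
  - move=> r; rewrite /= in_itv /= => /andP[r0 rs].
    by rewrite ler_wpM2r ?(g0 _ _ r0)// fB// subr_ge0 rs /= lerBlDr lerDl.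
rewrite RintegralZl //; last exact: gis.
by rewrite ler_wpM2l // sub_int.
Qed.

Lemma mGrec k n th : measurable_fun setT (fun t => Grec gamma k n t th).
Proof.
elim: k n => [|k IH] n /=; first exact: measurable_cst.
apply: (measurable_funD (measurable_cst th)).
apply: (@meas_conv R (gamma n) (fun y => expR (Grec gamma k n.+1 y th) - 1) (mgam n)).
have me : measurable_fun setT (fun y => expR (Grec gamma k n.+1 y th)).
  exact: measurableT_comp (@measurable_expR R) (IH n.+1).
exact: measurable_funB me (measurable_cst (1 : R)).
Qed.

Lemma mC1 k n : measurable_fun setT (fun t => C1rec gamma k n t).
Proof.
elim: k n => [|k IH] n /=; first exact: measurable_cst.
apply: (measurable_funD (measurable_cst (1 : R))).
exact: (@meas_conv R (gamma n) (fun y => C1rec gamma k n.+1 y) (mgam n)).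
Qed.

Lemma mC2 k n : measurable_fun setT (fun t => C2rec gamma k n t).
Proof.
elim: k n => [|k IH] n /=; first exact: measurable_cst.
apply: (@meas_conv R (gamma n) (fun y => C2rec gamma k n.+1 y + 2^-1 * C1rec gamma k n.+1 y ^+ 2) (mgam n)).
apply: measurable_funD => //.
apply: measurable_funM; first exact: measurable_cst.
exact: measurable_funX (mC1 k n.+1).
Qed.

Hypothesis rho1 : rho < 1.
Lemma rho0 : 0 <= rho.
Proof. apply: le_trans (grho 0); apply: Rintegral_ge0 => t; rewrite /= in_itv /= andbT; exact: g0. Qed.

Definition c1 := (1 - rho)^-1.
Definition c2 := rho / (2 * (1 - rho) ^+ 3).

Lemma c1_ge1 : 1 <= c1.
Proof.
have r0 := rho0; rewrite /c1 -[leLHS]invr1 lef_pV2 ?posrE ?subr_gt0//; lra.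
Qed.

Lemma c2_ge0 : 0 <= c2.
Proof. by rewrite /c2 divr_ge0 ?rho0// mulr_ge0// exprn_ge0// subr_ge0 ltW. Qed.

Lemma C1b k n s : 0 <= s -> `|C1rec gamma k n s| <= c1.
Proof.
elim: k n s => [|k IH] n s s0 /=; first by rewrite normr1 c1_ge1.
apply: le_trans (ler_normD _ _) _; rewrite normr1.
have := @bound_conv n (fun y => C1rec gamma k n.+1 y) s c1 (mC1 k n.+1).
move=> /(_ (fun y hy => IH _ _ (proj1 (andP hy))) s0) h.
apply: le_trans (lerD (lexx 1) h) _.
have e : c1 * (1 - rho) = 1 by rewrite /c1 mulVf // subr_eq0 gt_eqF.
rewrite mulrC; lra.
Qed.

Lemma C2b k n s : 0 <= s -> `|C2rec gamma k n s| <= c2.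
Proof.
elim: k n s => [|k IH] n s s0 /=; first by rewrite normr0 c2_ge0.
have mf : measurable_fun setT (fun y => C2rec gamma k n.+1 y + 2^-1 * C1rec gamma k n.+1 y ^+ 2).
  apply: measurable_funD; first exact: mC2.
  apply: measurable_funM; first exact: measurable_cst.
  exact: measurable_funX (mC1 k n.+1).
have fB : forall y, 0 <= y <= s ->
    `|C2rec gamma k n.+1 y + 2^-1 * C1rec gamma k n.+1 y ^+ 2| <= c2 + 2^-1 * c1 ^+ 2.
  move=> y /andP[y0 _]; apply: le_trans (ler_normD _ _) _.
  apply: lerD; first exact: IH.
  rewrite normrM normrX ger0_norm ?invr_ge0 ?ler0n// ler_wpM2l ?invr_ge0 ?ler0n//.
  have c10 : 0 <= c1 by apply: le_trans c1_ge1.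
  rewrite lerXn2r ?nnegrE ?normr_ge0 //; exact: C1b.
apply: le_trans (bound_conv _ _ _ _ mf fB s0) _.
have r0 := rho0.
have e : c1 * (1 - rho) = 1 by rewrite /c1 mulVf // subr_eq0 gt_eqF.
have e2 : c2 * (1 - rho) = 2^-1 * rho * c1 ^+ 2.
  rewrite /c2 /c1; field.
  by rewrite subr_eq0 gt_eqF.
have -> : (c2 + 2^-1 * c1 ^+ 2) * rho = c2 * rho + 2^-1 * rho * c1 ^+ 2 by ring.
rewrite -e2; lra.
Qed.

Definition bnd (s : R) (f : R -> R) := exists B, forall y, 0 <= y <= s -> `|f y| <= B.

Lemma bnd_lin s f g a : bnd s f -> bnd s g -> bnd s (fun y => f y - a * g y).
Proof.
move=> [B1 h1] [B2 h2]; exists (B1 + `|a| * B2) => y hy.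
apply: le_trans (ler_normB _ _) _; rewrite normrM lerD ?h1 // ler_wpM2l ?h2 //.
Qed.

Lemma bnd_sc s f a : bnd s f -> bnd s (fun y => a * f y).
Proof.
move=> [B h]; exists (`|a| * B) => y hy; rewrite normrM ler_wpM2l ?h //.
Qed.

Lemma int_gen n s (f h : R -> R) : measurable_fun setT f -> bnd s f ->
  (forall r, h r = f (s - r) * gamma n r) -> mu.-integrable `[0, s] (EFin \o h).
Proof.
move=> mf [B fB] e; rewrite (_ : h = fun r => f (s - r) * gamma n r).
  exact: int_conv _ _ _ _ mf fB.
exact/funext.
Qed.

Lemma conv_lin n s (f1 f2 f3 : R -> R) a b :
  measurable_fun setT f1 -> measurable_fun setT f2 -> measurable_fun setT f3 ->
  bnd s f1 -> bnd s f2 -> bnd s f3 ->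
  int0 s (fun r => f1 (s - r) * gamma n r) - a * int0 s (fun r => f2 (s - r) * gamma n r)
   - b * int0 s (fun r => f3 (s - r) * gamma n r) =
  int0 s (fun r => (f1 (s - r) - a * f2 (s - r) - b * f3 (s - r)) * gamma n r).
Proof.
move=> m1 m2 m3 b1 b2 b3.
have ma : measurable_fun setT (fun y => a * f2 y).
  exact: measurable_funM (measurable_cst a) m2.
have mb : measurable_fun setT (fun y => b * f3 y).
  exact: measurable_funM (measurable_cst b) m3.
have i1 := @int_gen n s f1 (fun r => f1 (s - r) * gamma n r) m1 b1 (fun r => erefl).
have i2 := @int_gen n s f2 (fun r => f2 (s - r) * gamma n r) m2 b2 (fun r => erefl).
have i3 := @int_gen n s f3 (fun r => f3 (s - r) * gamma n r) m3 b3 (fun r => erefl).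
have i2a := @int_gen n s (fun y => a * f2 y) (fun r => a * (f2 (s - r) * gamma n r)) ma
  (bnd_sc _ _ a b2) (fun r => mulrA _ _ _).
have i3b := @int_gen n s (fun y => b * f3 y) (fun r => b * (f3 (s - r) * gamma n r)) mb
  (bnd_sc _ _ b b3) (fun r => mulrA _ _ _).
have e12 : forall r, f1 (s - r) * gamma n r - a * (f2 (s - r) * gamma n r) =
    (f1 (s - r) - a * f2 (s - r)) * gamma n r by move=> r; ring.
have i12 := @int_gen n s (fun y => f1 y - a * f2 y)
  (fun r => f1 (s - r) * gamma n r - a * (f2 (s - r) * gamma n r))
  (measurable_funB m1 ma) (bnd_lin _ _ _ a b1 b2) e12.
rewrite /int0 -(RintegralZl a _ i2) // -(RintegralZl b _ i3) //.
rewrite -(RintegralB _ i1 i2a) // -(RintegralB _ i12 i3b) //.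
by apply: eq_Rintegral => r _; ring.
Qed.

Lemma fDb k n s : 0 <= s ->
  `|C2rec gamma k n s + 2^-1 * C1rec gamma k n s ^+ 2| <= c2 + 2^-1 * c1 ^+ 2.
Proof.
move=> s0; apply: le_trans (ler_normD _ _) _.
apply: lerD; first exact: C2b.
have c10 : 0 <= c1 by apply: le_trans c1_ge1.
rewrite normrM normrX ger0_norm ?invr_ge0 ?ler0n// ler_wpM2l ?invr_ge0 ?ler0n//.
rewrite lerXn2r ?nnegrE ?normr_ge0 //; exact: C1b.
Qed.

Lemma main_ind (x k1 : R) (M : nat) :
  k1 * `|x| <= (1 - rho) / 4 -> c1 <= k1 ->
  (forall n s, (1 <= n <= M)%N -> 0 <= s -> `|G gamma n s x M| <= k1 * `|x|) ->
  forall k n, (n + k = M)%N -> (1 <= n)%N -> forall s, 0 <= s ->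
  `|Grec gamma k n s x - C1rec gamma k n s * x - C2rec gamma k n s * x ^+ 2| <=
   4 * (c2 * (k1 + c1) + rho * k1 ^+ 3) / ((4 - rho) * (1 - rho)) * `|x| ^+ 3.
Proof.
move=> hK c1k hG.
set E := 4 * (c2 * (k1 + c1) + rho * k1 ^+ 3) / ((4 - rho) * (1 - rho)) * `|x| ^+ 3.
have r0 := rho0.
have c10 : 0 <= c1 by apply: le_trans c1_ge1.
have k10 : 0 <= k1 by apply: le_trans c1k.
have c20 := c2_ge0.
have E0 : 0 <= E.
  apply: mulr_ge0; last exact: exprn_ge0.
  have d0 : 0 <= (4 - rho) * (1 - rho).
    have := ltW rho1; move: (rho) => r h; apply: mulr_ge0; lra.
  apply: divr_ge0 => //.
  apply: mulr_ge0 => //; apply: addr_ge0; first by apply: mulr_ge0 => //; lra.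
  by apply: mulr_ge0 => //; exact: exprn_ge0.
have K1 : k1 * `|x| <= 1 by lra.
elim => [|k IH] n hnk hn s s0 /=.
  by rewrite mul1r mul0r subrr subr0 normr0.
have hG' : forall y, 0 <= y -> `|Grec gamma k n.+1 y x| <= k1 * `|x|.
  move=> y y0; have := hG n.+1 y _ y0; rewrite /G (_ : (M - n.+1 = k)%N); last by lia.
  by apply; apply/andP; split; lia.
pose fG := fun y => expR (Grec gamma k n.+1 y x) - 1.
pose fC := fun y => C1rec gamma k n.+1 y.
pose fD := fun y => C2rec gamma k n.+1 y + 2^-1 * C1rec gamma k n.+1 y ^+ 2.
have mG : measurable_fun setT fG.
  have me : measurable_fun setT (fun y => expR (Grec gamma k n.+1 y x)).
    exact: measurableT_comp (@measurable_expR R) (mGrec k n.+1 x).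
  exact: measurable_funB me (measurable_cst (1 : R)).
have mC : measurable_fun setT fC by exact: mC1.
have mD : measurable_fun setT fD.
  apply: measurable_funD; first exact: mC2.
  apply: measurable_funM; first exact: measurable_cst.
  exact: measurable_funX (mC1 k n.+1).
have bG : bnd s fG.
  exists (expR (k1 * `|x|) + 1) => y /andP[y0 _].
  apply: le_trans (ler_normB _ _) _; rewrite normr1 gtr0_norm ?expR_gt0 // lerD2r.
  by rewrite ler_expR (le_trans (ler_norm _)) ?hG'.
have bC : bnd s fC by exists c1 => y /andP[y0 _]; exact: C1b.
have bD : bnd s fD by exists (c2 + 2^-1 * c1 ^+ 2) => y /andP[y0 _]; exact: fDb.
have -> : x + int0 s (fun r => fG (s - r) * gamma n r) -
     (1 + int0 s (fun r => fC (s - r) * gamma n r)) * x -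
     int0 s (fun r => fD (s - r) * gamma n r) * x ^+ 2 =
   int0 s (fun r => fG (s - r) * gamma n r) - x * int0 s (fun r => fC (s - r) * gamma n r)
    - x ^+ 2 * int0 s (fun r => fD (s - r) * gamma n r) by ring.
rewrite (conv_lin n s fG fC fD x (x ^+ 2) mG mC mD bG bC bD).
pose F := fun y => fG y - x * fC y - x ^+ 2 * fD y.
have mF : measurable_fun setT F.
  apply: measurable_funB; first apply: measurable_funB => //.
    exact: measurable_funM (measurable_cst x) mC.
  exact: measurable_funM (measurable_cst (x ^+ 2)) mD.
have hF : forall y, 0 <= y <= s -> `|F y| <=
    E + (k1 * `|x|) ^+ 3 + (E + c2 * `|x| ^+ 2) * (k1 * `|x| + c1 * `|x|) / 2.
  move=> y /andP[y0 _]; rewrite /F /fG /fC /fD.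
  have hnk' : (n.+1 + k = M)%N by lia.
  apply: pt.
  exact: (IH n.+1 hnk' isT y y0).
  exact: hG'.
  exact: K1.
  exact: C1b.
  exact: C2b.
apply: le_trans (bound_conv n F s _ mF hF s0) _.
rewrite mulrC; apply: arith => //.
Qed.
End S2.

Theorem lemma4p9 (R : realType) (gamma : nat -> R -> R) (rho : R)
  (a : R -> R) (theta k1 : R) :
  (forall n t, 0 <= t -> 0 <= gamma n t) ->
  (forall n, (@lebesgue_measure R).-integrable `[0, +oo[
                (fun t => (gamma n t)%:E)) ->
  (* rho = sup_n int_0^oo gamma_n *)
  (forall n, \int[(@lebesgue_measure R)]_(t in `[0, +oo[) gamma n t <= rho) ->
  (forall r, (forall n, \int[(@lebesgue_measure R)]_(t in `[0, +oo[) gamma n t <= r) ->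
     rho <= r) ->
  rho < 1 ->
  (forall t, 0 < t -> 0 < a t) ->
  (fun t => a t / t) @ +oo --> (0 : R) ->
  (1 - rho)^-1 <= k1 ->
  (\forall t \near +oo, forall (M n : nat) (s : R), (1 <= n <= M)%N -> 0 <= s ->
      `|G gamma n s (a t / t * theta) M| <= k1 * (a t / t) * `|theta|) ->
  let k2 := 4 * (rho / (2 * (1 - rho) ^+ 3) * (k1 + (1 - rho)^-1) + rho * k1 ^+ 3)
            / ((4 - rho) * (1 - rho)) in
  \forall t \near +oo, k1 * (a t / t) * `|theta| <= (1 - rho) / 4 ->
    forall (M n : nat) (s : R), (1 <= n <= M)%N -> 0 <= s ->
      `|G gamma n s (a t / t * theta) M - C1 gamma n s M * (a t / t * theta)
         - C2 gamma n s M * (a t / t * theta) ^+ 2|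
      <= k2 * (a t / t * `|theta|) ^+ 3.
Proof.
move=> g0 gi grho rinf r1 apos alim c1k hnear k2.
have tpos : \forall t \near +oo, (0 : R) < t by apply: nbhs_pinfty_gt; exact: num_real.
apply: filterS2 tpos hnear => t t0 H hK M n s hn s0.
have at0 : 0 < a t / t by rewrite divr_gt0 // apos.
have ex : `|a t / t * theta| = a t / t * `|theta| by rewrite normrM gtr0_norm.
rewrite -ex.
have hK' : k1 * `|a t / t * theta| <= (1 - rho) / 4 by rewrite ex mulrA.
have hG : forall n s, (1 <= n <= M)%N -> 0 <= s ->
    `|G gamma n s (a t / t * theta) M| <= k1 * `|a t / t * theta|.
  by move=> n' s' hn' s'0; rewrite ex mulrA; exact: H.
have := @main_ind R gamma rho g0 gi grho r1 (a t / t * theta) k1 M hK' c1k hG (M - n)%N n.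
rewrite /G /C1 /C2; apply.
- by move/andP: hn => [_ hnM]; rewrite subnKC.
- by move/andP: hn => [].
- exact: s0.
Qed.
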